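(* For every integer $n\ge 0$, $$B_{n+1}\!\left(t+\frac{1}{t}\right)=\sum_{i=0}^{n}t^{\nu(n-i)-\nu(i)}.$$
   Context: The Stern polynomials $B_n(t)\in\mathbb{Z}[t]$, $n\ge 0$, are defined by $B_0(t)=0$, $B_1(t)=1$, $B_{2n}(t)=tB_n(t)$ and $B_{2n+1}(t)=B_n(t)+B_{n+1}(t)$ for $n\ge 1$. For $n\ge 0$, $\nu(n)$ denotes the number of digits $1$ in the binary representation of $n$. *)

(* Defs.v *)
From HB Require Import structures.
From mathcomp Require Import all_boot all_order all_algebra.
Set Implicit Arguments. Unset Strict Implicit. Unset Printing Implicit Defensive.
Import Order.TTheory GRing.Theory Num.Theory.

(* nu n = number of digits 1 in the binary expansion of n:
   bit i of n is odd (n %/ 2^i); bits at positions >= n vanish since n < 2^n. *)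
Definition nu (n : nat) : nat := \sum_(i < n.+1) odd (n %/ 2 ^ i).

(* Main.v *)
Require Import Defs.
From HB Require Import structures.
From mathcomp Require Import all_boot all_order all_algebra.
Import Order.TTheory GRing.Theory Num.Theory.

Definition fk k n := (\sum_(i < k) odd (n %/ 2 ^ i))%N.

Lemma fkS k n : fk k.+1 n = (odd n + fk k n./2)%N.
Proof.
rewrite /fk big_ord_recl /= expn0 divn1; congr (_ + _)%N.
apply: eq_bigr => i _; by rewrite /bump /= expnS divnMA divn2.
Qed.

Lemma fk_stable k m n : (n < 2 ^ k)%N -> fk (k + m) n = fk k n.
Proof.
move=> H; elim: m => [|m IH]; first by rewrite addn0.
rewrite addnS /fk big_ord_recr /= -/(fk _ n) IH divn_small ?addn0 //.
apply: leq_trans H _; by rewrite leq_exp2l // leq_addr.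
Qed.

Lemma fk_nu k n : (n < 2 ^ k)%N -> fk k n = nu n.
Proof.
move=> H; have H2 : (n < 2 ^ n.+1)%N.
  apply: ltn_trans (ltn_expl n (isT : (1 < 2)%N)) _; by rewrite ltn_exp2l.
rewrite /nu -/(fk _ n).
case: (leqP k n.+1) => hk.
  by rewrite -(subnKC hk) fk_stable.
by rewrite -(subnKC (ltnW hk)) fk_stable.
Qed.

Lemma nu_double a : nu a.*2 = nu a.
Proof.
have H : (a < 2 ^ a)%N by apply: ltn_expl.
have H1 : (a.*2 < 2 ^ a.+1)%N by rewrite expnS mul2n ltn_double.
rewrite -(@fk_nu a.+1) // fkS odd_double doubleK fk_nu //.
Qed.

Lemma nu_doubleS a : nu a.*2.+1 = (nu a).+1.
Proof.
have H : (a < 2 ^ a)%N by apply: ltn_expl.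
have H1 : (a.*2.+1 < 2 ^ a.+1)%N by rewrite expnS mul2n ltn_Sdouble.
rewrite -(@fk_nu a.+1) // fkS /= odd_double uphalf_double fk_nu //.
Qed.
Local Open Scope ring_scope.

Lemma sum2 (F : fieldType) (h : nat -> F) n :
  \sum_(i < n.*2) h i = \sum_(a < n) h a.*2 + \sum_(a < n) h a.*2.+1.
Proof.
elim: n => [|n IH]; first by rewrite !big_ord0 addr0.
rewrite doubleS !big_ord_recr /= IH -!addrA; congr (_ + _).
by rewrite addrCA.
Qed.

Lemma sum2S (F : fieldType) (h : nat -> F) n :
  \sum_(i < n.*2.+1) h i = \sum_(a < n.+1) h a.*2 + \sum_(a < n) h a.*2.+1.
Proof.
rewrite [LHS]big_ord_recr /= (sum2 _ h n) big_ord_recr /= addrAC.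
congr (_ + _ + _); exact: eq_bigr.
Qed.

Section T.
Variables (F : fieldType) (t : F) (ht : t != 0).
Definition T N := \sum_(i < N.+1) t ^ ((nu (N - i))%:Z - (nu i)%:Z).

Lemma Todd m : T m.*2.+1 = (t + t^-1) * T m.
Proof.
rewrite /T -doubleS (sum2 _ (fun i : nat => t ^ ((nu (m.*2.+1 - i))%:Z - (nu i)%:Z))) mulrDl !mulr_sumr; congr (_ + _); apply: eq_bigr => a _.
  have -> : (m.*2.+1 - a.*2 = (m - a).*2.+1)%N.
    by rewrite subSn ?doubleB // leq_double -ltnS.
  rewrite nu_doubleS nu_double -addn1 PoszD addrAC [LHS]expfzDr // expr1z mulrC //.
have -> : (m.*2.+1 - a.*2.+1 = (m - a).*2)%N by rewrite subSS doubleB.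
rewrite nu_doubleS nu_double -(addn1 (nu a)) PoszD opprD addrA [LHS]expfzDr // mulrC exprN1 //.
Qed.

Lemma Teven m : T m.+1.*2 = T m + T m.+1.
Proof.
rewrite /T (sum2S _ (fun i : nat => t ^ ((nu (m.+1.*2 - i))%:Z - (nu i)%:Z))) addrC; congr (_ + _); apply: eq_bigr => a _.
  have -> : (m.+1.*2 - a.*2.+1 = (m - a).*2.+1)%N.
    by rewrite doubleS subSS subSn ?doubleB // leq_double -ltnS.
  by rewrite /= nu_doubleS nu_doubleS -(addn1 (nu (m - a))) -(addn1 (nu a)) !PoszD opprD addrACA subrr addr0.
by rewrite /= -doubleB nu_double nu_double.
Qed.
End T.
Definition bv (B : nat -> {poly int}) (F : fieldType) (t : F) m :=
  (map_poly (fun z : int => z%:~R : F) (B m)).[t + t^-1].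

Theorem theorem3p7 (B : nat -> {poly int})
  (B0 : B 0%N = 0) (B1 : B 1%N = 1)
  (Beven : forall n : nat, (1 <= n)%N -> B (n.*2)%N = 'X * B n)
  (Bodd : forall n : nat, (1 <= n)%N -> B (n.*2.+1)%N = B n + B n.+1)
  (F : fieldType) (t : F) (ht : t != 0) (n : nat) :
  (map_poly (fun z : int => z%:~R) (B n.+1)).[t + t^-1]
  = \sum_(i < n.+1) t ^ ((nu (n - i))%:Z - (nu i)%:Z).
Proof.
have bE : forall m, (1 <= m)%N -> bv B F t m.*2 = (t + t^-1) * bv B F t m.
  move=> m hm; rewrite /bv Beven // rmorphM /= map_polyX hornerM hornerX //.
have bO : forall m, (1 <= m)%N -> bv B F t m.*2.+1 = bv B F t m + bv B F t m.+1.
  move=> m hm; rewrite /bv Bodd // rmorphD /= hornerD //.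
have b1 : bv B F t 1 = 1 by rewrite /bv B1 rmorph1 hornerC.
change (bv B F t n.+1 = @T F t n).
elim/ltn_ind: n => N IH.
case: N IH => [|N] IH.
  by rewrite b1 /T big_ord1 /= subrr expr0z.
have : (exists m, N.+1 = m.*2.+1) \/ (exists m, N.+1 = m.*2).
  case h: (odd N.+1); [left|right]; exists (N.+1)./2;
    by rewrite -[LHS]odd_double_half h.
case=> [[m hm]|[m hm]]; rewrite hm.
  rewrite -doubleS bE // Todd // IH //.
  by rewrite hm ltnS -addnn leq_addr.
case: m hm => [|p] hm; first by [].
rewrite bO // Teven IH ?hm ?IH ?hm //.
  by rewrite doubleS !ltnS -addnn leq_addr.
by rewrite doubleS !ltnS -addnn ltnW // ltnS leq_addr.
Qed.
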